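(* Fix integers $m\ge 1$ and $n\ge 0$. Let $a=\{a_1,\dots,a_m\}$ and $a'=\{a'_1,\dots,a'_m\}$ be two sets of $m$ positive integers, all different from $1$, each of which is multiplicatively independent. Then $\chi_{\mathcal{A}_n(a)}(t)=\chi_{\mathcal{A}_n(a')}(t)$. That is, the characteristic polynomial of $\mathcal{A}_n(a)$ depends only on $m$ and $n$, as long as the $a_i$ are multiplicatively independent.
   Context: A set $\{a_1,\dots,a_m\}$ of positive rational numbers is multiplicatively independent if $a_1^{i_1}\cdots a_m^{i_m}=1$ with integers $i_1,\dots,i_m$ implies $i_1=\dots=i_m=0$. For a set $a=\{a_1,\dots,a_m\}$ of positive rational numbers different from $1$ and $n\ge 1$, $\mathcal{A}_n(a)$ denotes the hyperplane arrangement in $\mathbb{R}^n$ consisting of the hyperplanes $x_i=0$ ($1\le i\le n$), $x_i=x_j$ ($1\le i<j\le n$), and $x_i=a_rx_j$ ($1\le i\neq j\le n$, $1\le r\le m$); $\mathcal{A}_0(a)$ is the empty arrangement in $\mathbb{R}^0$, with characteristic polynomial $1$. For a finite arrangement $\mathcal{A}$ of affine hyperplanes in $\mathbb{R}^n$, the characteristic polynomial is $\chi_{\mathcal{A}}(t)=\sum_{\mathcal{B}}(-1)^{\#\mathcal{B}}t^{n-\operatorname{rank}(\mathcal{B})}$, the sum over subsets $\mathcal{B}\subseteq\mathcal{A}$ whose hyperplanes have nonempty common intersection, where $\operatorname{rank}(\mathcal{B})$ is the dimension of the span of the normal vectors of the hyperplanes in $\mathcal{B}$ (equivalently $\sum_{x\in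 L(\mathcal{A})}\mu(\hat 0,x)t^{\dim x}$ over the intersection poset). *)

(* Defs.v *)
From HB Require Import structures.
From mathcomp Require Import all_boot all_order all_algebra.
Set Implicit Arguments. Unset Strict Implicit. Unset Printing Implicit Defensive.
Import Order.TTheory GRing.Theory Num.Theory.
Local Open Scope ring_scope.

Definition mult_indep (a : seq rat) : Prop :=
  forall e : 'I_(size a) -> int,
    \prod_(r < size a) (a`_r ^ e r) = 1 -> forall r, e r = 0.

Definition evec (n : nat) (i : 'I_n) : 'rV[rat]_n := delta_mx 0 i.

(* Normal vectors of the hyperplanes of A_n(a):
   x_i = 0           : e_i
   x_i = x_j (i<j)   : e_i - e_j
   x_i = a_r x_j (i<>j) : e_i - a_r e_j                                   *)
Definition arr_normals (n : nat) (a : seq rat) : seq 'rV[rat]_n :=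
  [seq evec i | i : 'I_n <- enum 'I_n]
  ++ flatten [seq [seq evec i - evec j | j : 'I_n <- enum 'I_n & (i < j)%N] | i : 'I_n <- enum 'I_n]
  ++ flatten [seq flatten [seq [seq evec i - r *: evec j | r <- a]
                          | j : 'I_n <- enum 'I_n & i != j] | i : 'I_n <- enum 'I_n].

(* Canonical normal of a linear hyperplane: scale so that the first nonzero
   coordinate is 1.  Two nonzero normals define the same (linear) hyperplane
   iff their canonical forms are equal. *)
Definition normz (n : nat) (v : 'rV[rat]_n) : 'rV[rat]_n :=
  (head 0 [seq v 0 k | k <- enum 'I_n & v 0 k != 0])^-1 *: v.

Definition arrA (n : nat) (a : seq rat) : seq 'rV[rat]_n :=
  undup [seq normz v | v <- arr_normals n a].

(* Characteristic polynomial of a central arrangement in dimension n given by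
   a duplicate-free list s of normal vectors:
     chi(t) = sum_{B subset A} (-1)^#B t^(n - rank B),
   (every subset has nonempty common intersection, containing 0). rank B is
   the dimension of the span of the normals in B. *)
Definition char_poly_arr (n : nat) (s : seq 'rV[rat]_n) : {poly rat} :=
  \sum_(B : {set 'I_(size s)})
     ((-1) ^+ #|B|) *: 'X^(subn n (\rank (\matrix_(k < size s, j < n)
                                         (if k \in B then (nth 0 s k) 0 j else 0)))).

(* Main.v *)
Require Import Defs.
From HB Require Import structures.
From mathcomp Require Import all_boot all_order all_algebra.
From mathcomp Require Import ring.
Import Order.TTheory GRing.Theory Num.Theory.
Set Implicit Arguments. Unset Strict Implicit. Unset Printing Implicit Defensive.
Local Open Scope ring_scope.

Section LA.
Variable n : nat.
Local Notation V := 'rV[rat]_n.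
Definition ssum (l : seq V) : 'M[rat]_n := (\sum_(v <- l) <<v>>)%MS.
Definition srank (l : seq V) := \rank (ssum l).

Lemma ssum_cons v l : ssum (v :: l) = (<<v>> + ssum l)%MS.
Proof. by rewrite /ssum big_cons. Qed.

Lemma ssum_map_eq (T : Type) (f g : T -> V) s :
  (forall x, (f x :=: g x)%MS) -> ssum (map f s) = ssum (map g s).
Proof.
move=> H; rewrite /ssum !big_map; apply: eq_bigr => x _; exact: eq_genmx.
Qed.

Lemma srank_cons_eq u u' l : (u :=: u')%MS -> srank (u :: l) = srank (u' :: l).
Proof. by move=> H; rewrite /srank !ssum_cons (eq_genmx H). Qed.

Lemma srank_cons0 l : srank (0 :: l) = srank l.
Proof. by rewrite /srank ssum_cons genmx0 adds0mx_id. Qed.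

Lemma ssum_sup x l : x \in l -> (<<x>> <= ssum l)%MS.
Proof.
elim: l => // y l IH; rewrite inE ssum_cons => /orP [/eqP ->|/IH h].
  exact: addsmxSl.
exact: submx_trans h (addsmxSr _ _).
Qed.

Lemma ssum_sub l (B : 'M[rat]_n) : (forall x, x \in l -> (x <= B)%MS) -> (ssum l <= B)%MS.
Proof.
move=> H; rewrite /ssum big_seq; elim/big_rec: _ => [|x Y hx hY]; first by rewrite sub0mx.
by rewrite addsmx_sub hY andbT genmxE H.
Qed.

Lemma srank_pivot (v : V) (i : 'I_n) (W : seq V) : v 0 i = 1 ->
  srank (v :: W) = (srank (map (fun w : V => w - w 0 i *: v) W)).+1.
Proof.
move=> vi; set L := fun w : V => w - w 0 i *: v.
set e : 'cV[rat]_n := delta_mx i 0.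
have Le : forall w : V, L w *m e = 0.
  move=> w; rewrite -colE; apply/matrixP => x y; rewrite !mxE !ord1 vi; ring.
have v0 : v != 0 by apply/eqP => h; move: vi; rewrite h mxE => /esym/eqP; rewrite oner_eq0.
have vK : ~~ (v <= kermx e)%MS.
  rewrite sub_kermx -colE; apply/negP => /eqP/matrixP/(_ 0 0); rewrite !mxE vi => /eqP.
  by rewrite oner_eq0.
set S' := ssum (map L W).
have S'K : (S' <= kermx e)%MS.
  apply: ssum_sub => x /mapP [w _ ->]; rewrite sub_kermx Le //.
have cap0 : \rank (<<v>> :&: S')%MS = 0%N.
  have H := mxrank_leqif_sup (capmxSl <<v>>%MS S').
  have r1 : \rank <<v>>%MS = 1%N by rewrite genmxE rank_rV v0.
  case: H; rewrite r1; case E: (\rank _) => [//|[|//]] _.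
  move=> /esym; rewrite eqxx => hv; case/negP: vK.
  rewrite -genmxE; apply: submx_trans hv _; apply: submx_trans (capmxSr _ _) S'K.
have eqs : \rank (<<v>> + ssum W)%MS = \rank (<<v>> + S')%MS.
  apply/eqP; rewrite eqn_leq; apply/andP; split; apply: mxrankS;
    rewrite addsmx_sub addsmxSl /=; apply: ssum_sub => x hx.
  - have -> : x = x 0 i *: v + L x by rewrite /L addrC subrK.
    apply: addmx_sub_adds; first by rewrite scalemx_sub // genmxE.
    have h1 := ssum_sup (map_f L hx); by rewrite genmxE in h1.
  - move/mapP: hx => [w hw ->]; rewrite /L addrC; apply: addmx_sub_adds.
      by rewrite -scaleNr scalemx_sub // genmxE.
    by have h1 := ssum_sup hw; rewrite genmxE in h1.
rewrite /srank ssum_cons eqs -/S'.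
have := mxrank_sum_cap <<v>>%MS S'; rewrite cap0 addn0 genmxE rank_rV v0 => ->.
by rewrite add1n.
Qed.

End LA.

Section Abs.
Variables m n : nat.
Definition G := {ffun 'I_m -> int}.
Definition arow := option ('I_n * 'I_n * option G).

Definition tP (i : 'I_n) (x : arow) : arow :=
  match x with
  | None => None
  | Some (k, l, None) => if k == i then None else x
  | Some (k, l, Some q) =>
      if k == i then (if l == i then None else Some (l, l, None))
      else if l == i then Some (k, k, None) else x
  end.

Definition tE (i j : 'I_n) (g : G) (x : arow) : arow :=
  match x with
  | None => None
  | Some (k, l, None) => if k == i then Some (j, j, None) else x
  | Some (k, l, Some q) =>
      if k == i then
        (if l == i then Some (j, j, Some q) else Some (j, l, Some (q - g)))
      else if l == i then Some (k, j, Some (q + g)) else x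
  end.

Fixpoint ar (S : seq arow) (f : arow -> arow) : nat :=
  match S with
  | [::] => 0%N
  | x :: S' =>
    match f x with
    | None => ar S' f
    | Some (i, _, None) => (ar S' (tP i \o f)).+1
    | Some (i, j, Some g) =>
        if i == j then (if g == 0 then ar S' f else (ar S' (tP i \o f)).+1)
        else (ar S' (tE i j g \o f)).+1
    end
  end.

Variable mono : G -> rat.
Hypothesis mono_add : forall p q, mono (p + q) = mono p * mono q.
Hypothesis mono_nz : forall p, mono p != 0.
Hypothesis mono_1 : forall p, mono p = 1 -> p = 0.

Lemma mono0 : mono 0 = 1.
Proof.
have := mono_add 0 0; rewrite addr0 => h.
have := mono_nz 0; move: h; set x := mono 0 => h nz.
by apply: (mulfI nz); rewrite mulr1 -h.
Qed.

Lemma mono_sub p q : mono (p - q) = mono p / mono q.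
Proof.
have := mono_add (p - q) q; rewrite subrK => ->.
by rewrite mulfK.
Qed.

Lemma mono_eq1 p : (mono p == 1) = (p == 0).
Proof.
apply/eqP/eqP => [/mono_1 //|->]; exact: mono0.
Qed.

Definition vec (x : arow) : 'rV[rat]_n :=
  match x with
  | None => 0
  | Some (i, _, None) => evec i
  | Some (i, j, Some g) => evec i - mono g *: evec j
  end.

Lemma evecE (k : 'I_n) t : evec k 0 t = (k == t)%:R.
Proof. by rewrite /evec mxE eqxx eq_sym. Qed.

Ltac neqs := repeat match goal with
 | H : is_true (?a != ?b) |- context [?b == ?a] => rewrite (eq_sym b a) (negbTE H)
 | H : is_true (?a != ?b) |- context [?a == ?b] => rewrite (negbTE H)
 end.
Ltac rr := apply/rowP => ?; rewrite !mxE ?eqxx /=; neqs; rewrite /= ?mulr0n ?mulr1n; ring.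

Lemma tP_ok i x : exists2 c : rat, c != 0 &
  vec x - vec x 0 i *: evec i = c *: vec (tP i x).
Proof.
case: x => [[[k l] o]|] /=; last first.
  by exists 1; rewrite ?oner_eq0 // mxE scale0r subr0 scaler0.
case: o => [q|] /=; last first.
- case: (eqVneq k i) => [->|ki]; exists 1; rewrite ?oner_eq0 //; rr.
- case: (eqVneq k i) => [->|ki]; case: (eqVneq l i) => [->|li] /=.
  + exists 1; rewrite ?oner_eq0 //; rr.
  + exists (- mono q); first by rewrite oppr_eq0.
    rr.
  + exists 1; rewrite ?oner_eq0 //; rr.
  + exists 1; rewrite ?oner_eq0 //; rr.
Qed.

Lemma tE_ok i j g x : i != j -> exists2 c : rat, c != 0 &
  vec x - vec x 0 i *: (evec i - mono g *: evec j) = c *: vec (tE i j g x).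
Proof.
move=> ij; have Gnz := mono_nz g.
case: x => [[[k l] o]|] /=; last first.
  by exists 1; rewrite ?oner_eq0 // mxE scale0r subr0 scaler0.
case: o => [q|] /=; last first.
- case: (eqVneq k i) => [->|ki].
    by exists (mono g) => //; rr.
  by exists 1; rewrite ?oner_eq0 //; rr.
- case: (eqVneq k i) => [->|ki]; case: (eqVneq l i) => [->|li] /=.
  + by exists (mono g) => //; rr.
  + exists (mono g) => //; rewrite mono_sub.
    apply/rowP => ?; rewrite !mxE ?eqxx /=; neqs; rewrite /= ?mulr0n ?mulr1n.
    by field.
  + by exists 1; rewrite ?oner_eq0 // mono_add; rr.
  + by exists 1; rewrite ?oner_eq0 //; rr.
Qed.

Lemma eqmx_of (u v : 'rV[rat]_n) (c : rat) : c != 0 -> u = c *: v -> (u :=: v)%MS.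
Proof. by move=> cn ->; apply: eqmx_scale. Qed.

Lemma pt_step i S (f : arow -> arow) :
  srank (evec i :: map (vec \o f) S) = (srank (map (vec \o (tP i \o f)) S)).+1.
Proof.
rewrite (@srank_pivot _ _ i); last by rewrite evecE eqxx.
congr (_.+1); rewrite -map_comp /srank; congr (\rank _); apply: ssum_map_eq => y /=.
by have [c cn ->] := tP_ok i (f y); apply: eqmx_scale.
Qed.

Lemma ar_ok S f : srank (map (vec \o f) S) = ar S f.
Proof.
elim: S f => [|x S IH] f /=; first by rewrite /srank /ssum big_nil mxrank0.
case E: (f x) => [[[i j] [g|]]|] /=; last first.
- by rewrite srank_cons0 IH.
- by rewrite pt_step IH.
case: (eqVneq i j) => [<-|ij].
  case: (eqVneq g 0) => [->|gn].
    by rewrite mono0 scale1r subrr srank_cons0 IH.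
  rewrite (@srank_cons_eq _ _ (evec i)); first by rewrite pt_step IH.
  apply: (@eqmx_of _ _ (1 - mono g)); first by rewrite subr_eq0 eq_sym mono_eq1.
  by rewrite scalerBl scale1r.
rewrite (@srank_pivot _ _ i); last first.
  by rewrite !mxE eqxx /=; neqs; rewrite /= eqxx mulr0 subr0.
apply: congr1; rewrite -map_comp -IH /srank; congr (\rank _); apply: ssum_map_eq => y /=.
by have [c cn ->] := tE_ok g (f y) ij; apply: eqmx_scale.
Qed.

End Abs.

Section NZ.
Variable n : nat.
Local Notation V := 'rV[rat]_n.

Definition hd (u : V) := head 0 [seq u 0 k | k <- enum 'I_n & u 0 k != 0].

Lemma normzE (u : V) : normz u = (hd u)^-1 *: u.
Proof. by []. Qed.

Lemma hd_nz (u : V) : u != 0 -> hd u != 0.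
Proof.
move=> un; rewrite /hd.
have [k uk] : exists k, u 0 k != 0.
  apply/existsP; apply: contraR un => /existsPn h; apply/eqP/rowP => k.
  by rewrite mxE; have := h k; rewrite negbK => /eqP.
have : u 0 k \in [seq u 0 k | k <- enum 'I_n & u 0 k != 0].
  by apply: map_f; rewrite mem_filter uk mem_enum.
case E: [seq _ | _ <- _ & _] => [//|x s] _ /=.
have : x \in [seq u 0 k | k <- enum 'I_n & u 0 k != 0] by rewrite E inE eqxx.
by case/mapP => j; rewrite mem_filter => /andP [hj _] ->.
Qed.

Lemma hd_scale c (u : V) : c != 0 -> hd (c *: u) = c * hd u.
Proof.
move=> cn; rewrite /hd.
have -> : [seq (c *: u) 0 k | k <- enum 'I_n & (c *: u) 0 k != 0]
   = [seq c * x | x <- [seq u 0 k | k <- enum 'I_n & u 0 k != 0]].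
  rewrite -map_comp (@eq_filter _ _ (fun k => u 0 k != 0)); last first.
    by move=> k; rewrite mxE mulf_eq0 negb_or cn.
  by apply: eq_map => k /=; rewrite mxE.
by case: [seq _ | _ <- _ & _] => //=; rewrite mulr0.
Qed.

Lemma normz_scale c (u : V) : c != 0 -> normz (c *: u) = normz u.
Proof.
move=> cn; rewrite !normzE hd_scale // invfM scalerA.
case: (eqVneq (hd u) 0) => [->|hn]; first by rewrite invr0 mulr0 mul0r.
by rewrite mulrAC mulVf // mul1r.
Qed.

Lemma normz0 : normz (0 : V) = 0.
Proof. by rewrite normzE scaler0. Qed.

Lemma normz_eqmx (u : V) : (normz u :=: u)%MS.
Proof.
case: (eqVneq u 0) => [->|un]; first by rewrite normz0.
by rewrite normzE; apply: eqmx_scale; rewrite invr_eq0 hd_nz.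
Qed.

Lemma normz_eq0 (u : V) : (normz u == 0) = (u == 0).
Proof.
case: (eqVneq u 0) => [->|un]; first by rewrite normz0 eqxx.
by rewrite normzE scaler_eq0 invr_eq0 (negbTE un) (negbTE (hd_nz un)).
Qed.

Lemma srank1 (u : V) : srank [:: u] = (u != 0).
Proof.
by rewrite /srank /ssum big_cons big_nil addsmx0 genmxE rank_rV.
Qed.

Lemma srank2_le (u v : V) : (srank [:: u; v] <= 1)%N = (v <= u)%MS || (u <= v)%MS.
Proof.
rewrite /srank /ssum !big_cons big_nil.
have e : (<<u>> + (<<v>> + (0 : 'M_n)) :=: u + v)%MS.
  apply: (adds_eqmx (genmxE u)).
  exact: (eqmx_trans (addsmx0 _ _) (genmxE v)).
rewrite e.
case: (eqVneq u 0) => [->|un].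
  by rewrite sub0mx orbT adds0mx rank_rV; case: (_ != 0).
apply/idP/idP.
  move=> h; apply/orP; left.
  have := mxrank_leqif_sup (addsmxSl u v); rewrite rank_rV un.
  case=> h1 h2; have : (u + v <= u)%MS.
    by rewrite -h2 eqn_leq h1 /=.
  exact: submx_trans (addsmxSr u v).
case/orP => h.
  by rewrite (addsmx_idPl h) rank_rV; case: (_ != 0).
by rewrite (addsmx_idPr h) rank_rV; case: (_ != 0).
Qed.

Lemma normz_eq (u v : V) : (normz u == normz v) = ((u == 0) == (v == 0)) && (srank [:: u; v] <= 1)%N.
Proof.
rewrite srank2_le.
case: (eqVneq u 0) => [u0|un]; case: (eqVneq v 0) => [v0|vn] /=.
- by rewrite u0 v0 eqxx sub0mx.
- have /eqP nu : normz u == 0 by rewrite normz_eq0 u0.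
  by rewrite nu eq_sym normz_eq0 (negbTE vn).
- have /eqP nv : normz v == 0 by rewrite normz_eq0 v0.
  by rewrite nv normz_eq0 (negbTE un).
apply/eqP/idP.
  rewrite !normzE => h; apply/orP; left; apply/sub_rVP.
  exists (hd v / hd u); rewrite -scalerA h scalerA mulfV ?scale1r //.
  exact: hd_nz.
case/orP => /sub_rVP [c hc].
  rewrite hc normz_scale //; apply: contraNneq vn => c0; by rewrite hc c0 scale0r.
rewrite hc normz_scale //; apply: contraNneq un => c0; by rewrite hc c0 scale0r.
Qed.

End NZ.

Lemma mx_srank n N (F : 'I_N -> 'rV[rat]_n) :
  \rank (\matrix_(k < N, j < n) F k 0 j) = srank [seq F k | k <- enum 'I_N].
Proof.
rewrite /srank /ssum big_map big_enum /=.
set A := \matrix_(k, j) _.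
have rk : forall k, row k A = F k by move=> k; apply/rowP => j; rewrite !mxE.
apply/eqP; rewrite eqn_leq; apply/andP; split; apply: mxrankS.
  apply/row_subP => k; rewrite rk -genmxE; exact: (sumsmx_sup k).
apply/sumsmx_subP => k _; rewrite genmxE -rk; exact: row_sub.
Qed.

Lemma undup_transfer (T : Type) (U1 U2 : eqType) (f1 : T -> U1) (f2 : T -> U2) (s : seq T) :
  (forall x y, (f1 x == f1 y) = (f2 x == f2 y)) ->
  exists s1, undup (map f1 s) = map f1 s1 /\ undup (map f2 s) = map f2 s1.
Proof.
move=> H; elim: s => [|x s [s1 [e1 e2]]]; first by exists [::].
have hm : (f1 x \in map f1 s) = (f2 x \in map f2 s).
  rewrite -!has_pred1 !has_map; apply: eq_has => y /=; exact: H.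
rewrite /= hm; case: ifP => _; first by exists s1.
by exists (x :: s1); rewrite /= e1 e2.
Qed.

Lemma cpa_gen n (s : seq 'rV[rat]_n) N (H : size s = N) (R : {set 'I_N} -> nat) :
  (forall B : {set 'I_(size s)},
     \rank (\matrix_(k < size s, j < n) (if k \in B then (nth 0 s k) 0 j else 0))
     = R [set cast_ord H i | i in B]) ->
  char_poly_arr s = \sum_(B : {set 'I_N}) ((-1) ^+ #|B|) *: 'X^(subn n (R B)).
Proof.
subst N => HR; rewrite /char_poly_arr; apply: eq_bigr => B _.
rewrite HR; congr (_ *: 'X^(subn n (R _))).
by rewrite -[RHS]imset_id; apply: eq_imset => i; rewrite cast_ord_id.
Qed.

Definition unitv m (r : 'I_m) : G m := [ffun k => ((k == r) : nat)%:Z].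
Definition monoA m (a : seq rat) (p : G m) : rat := \prod_(r < m) a`_r ^ (p r).

Lemma monoA0 m a : @monoA m a 0 = 1.
Proof. by rewrite /monoA big1 // => r _; rewrite ffunE expr0z. Qed.

Lemma monoA_unit m a (r : 'I_m) : monoA a (unitv r) = a`_r.
Proof.
rewrite /monoA (bigD1 r) //= big1 ?mulr1; first by rewrite ffunE eqxx expr1z.
by move=> k kr; rewrite ffunE (negbTE kr) expr0z.
Qed.

Definition T0 m n : seq (arow m n) :=
  [seq Some (i, i, None) | i : 'I_n <- enum 'I_n]
  ++ flatten [seq [seq Some (i, j, Some 0) | j : 'I_n <- enum 'I_n & (i < j)%N] | i : 'I_n <- enum 'I_n]
  ++ flatten [seq flatten [seq [seq Some (i, j, Some (unitv r)) | r : 'I_m <- enum 'I_m]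
                          | j : 'I_n <- enum 'I_n & i != j] | i : 'I_n <- enum 'I_n].

Lemma enum_nth_eq m (a : seq rat) : size a = m -> [seq a`_r | r : 'I_m <- enum 'I_m] = a.
Proof.
move=> Hs; have -> : [seq a`_r | r : 'I_m <- enum 'I_m] = [seq a`_i | i <- map val (enum 'I_m)].
  by rewrite -map_comp.
rewrite val_enum_ord -Hs map_nth_iota0 //.
exact: take_size.
Qed.

Lemma normals_T0 m n (a : seq rat) : size a = m ->
  arr_normals n a = map (vec (@monoA m a)) (T0 m n).
Proof.
move=> Hs; rewrite /arr_normals /T0 !map_cat; congr (_ ++ _ ++ _).
- by rewrite -[RHS]map_comp.
- rewrite [RHS]map_flatten; congr flatten; rewrite -[RHS]map_comp; apply: eq_map => i /=.
  rewrite -[RHS]map_comp; apply: eq_map => j /=; by rewrite monoA0 scale1r.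
- rewrite [RHS]map_flatten; congr flatten; rewrite -[RHS]map_comp; apply: eq_map => i /=.
  rewrite [RHS]map_flatten; congr flatten; rewrite -[RHS]map_comp; apply: eq_map => j /=.
  rewrite -[RHS]map_comp -[in LHS](enum_nth_eq Hs) -map_comp; apply: eq_map => r /=.
  by rewrite monoA_unit.
Qed.

Definition Rf m n (T1 : seq (arow m n)) (B' : {set 'I_(size T1)}) : nat :=
  ar [seq if i \in map val (enum B') then nth None T1 i else None | i <- iota 0 (size T1)] id.

Section Conc.
Variables m n : nat.
Variable mono : G m -> rat.
Hypothesis mono_add : forall p q, mono (p + q) = mono p * mono q.
Hypothesis mono_nz : forall p, mono p != 0.
Hypothesis mono_1 : forall p, mono p = 1 -> p = 0.

Local Notation f := (fun x : arow m n => normz (vec mono x)).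

Lemma srank_ar (L : seq (arow m n)) : srank (map f L) = ar L id.
Proof.
rewrite -(ar_ok mono_add mono_nz mono_1) /srank; congr (\rank _).
rewrite (ssum_map_eq _ (g := vec mono)); last by move=> x; exact: normz_eqmx.
by rewrite /ssum !big_map.
Qed.

Lemma f_eq x y : (f x == f y) =
  ((ar [:: x] id == 0%N) == (ar [:: y] id == 0%N)) && (ar [:: x; y] id <= 1)%N.
Proof.
rewrite normz_eq -!(ar_ok mono_add mono_nz mono_1) /= !srank1.
by rewrite !eqb0 !negbK.
Qed.

Lemma rank_part (T1 : seq (arow m n)) (H : size (map f T1) = size T1)
   (B : {set 'I_(size (map f T1))}) :
  \rank (\matrix_(k < size (map f T1), j < n)
            (if k \in B then (nth 0 (map f T1) k) 0 j else 0))
  = Rf [set cast_ord H i | i in B].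
Proof.
set s := map f T1.
have -> : \matrix_(k < size s, j < n) (if k \in B then (nth 0 s k) 0 j else 0)
        = \matrix_(k < size s, j < n) (if k \in B then nth 0 s k else 0) 0 j.
  by apply/matrixP => k j; rewrite !mxE; case: (k \in B); rewrite ?mxE.
rewrite mx_srank /Rf -srank_ar; congr srank.
have hB : forall k : 'I_(size s), (k \in B) = (val k \in map val (enum B)).
  by move=> k; rewrite mem_map ?mem_enum //; exact: val_inj.
have hB' : forall i : nat, (i \in map val (enum [set cast_ord H i | i in B]))
                          = (i \in map val (enum B)).
  move=> i; apply/mapP/mapP => [[j]|[k]].
    rewrite mem_enum => /imsetP [k kB ->] ->; exists k => //; by rewrite mem_enum.
  rewrite mem_enum => kB ->; exists (cast_ord H k) => //.
  by rewrite mem_enum; apply: imset_f.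
have -> : [seq (if k \in B then nth 0 s k else 0) | k <- enum 'I_(size s)]
   = [seq (if k \in map val (enum B) then nth 0 s k else 0) | k <- map val (enum 'I_(size s))].
  by rewrite -[RHS]map_comp; apply: eq_map => k /=; rewrite hB.
rewrite val_enum_ord -map_comp (_ : iota 0 (size s) = iota 0 (size T1)) ?H //; apply/eq_in_map => i; rewrite mem_iota add0n => hi /=.
rewrite hB'; case: ifP => _; first by rewrite /s (nth_map None).
by apply/esym/eqP; rewrite normz_eq0.
Qed.

End Conc.

Section MonoA.
Variable m : nat.
Variable ar : seq rat.
Hypothesis Hs : size ar = m.
Hypothesis Hnz : forall r : 'I_m, ar`_r != 0.
Hypothesis Hind : mult_indep ar.

Lemma monoA_add (p q : G m) : monoA ar (p + q) = monoA ar p * monoA ar q.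
Proof.
rewrite /monoA -big_split; apply: eq_bigr => r _; rewrite ffunE exprzDr //.
by rewrite unitfE.
Qed.

Lemma monoA_nz (p : G m) : monoA ar p != 0.
Proof. by apply/prodf_neq0 => r _; exact: expfz_neq0. Qed.

Lemma monoA_1 (p : G m) : monoA ar p = 1 -> p = 0.
Proof.
move: Hind; rewrite /mult_indep Hs => H h; apply/ffunP => r.
by rewrite ffunE; exact: H h r.
Qed.
End MonoA.

Lemma nat_props m (a : seq nat) : size a = m ->
  (forall x, x \in a -> (0 < x)%N /\ x <> 1%N) ->
  size [seq (x%:R : rat) | x <- a] = m /\
  forall r : 'I_m, [seq (x%:R : rat) | x <- a]`_r != 0.
Proof.
move=> Hs Ha; split; first by rewrite size_map.
move=> r; have hr : (r < size a)%N by rewrite Hs.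
rewrite (nth_map 0%N) // pnatr_eq0 -lt0n.
by case: (Ha _ (mem_nth 0%N hr)).
Qed.

Unset Implicit Arguments.
Theorem theorem2p1 (m n : nat) (a a' : seq nat) :
  (1 <= m)%N ->
  size a = m -> size a' = m -> uniq a -> uniq a' ->
  (forall x, x \in a -> (0 < x)%N /\ x <> 1%N) ->
  (forall x, x \in a' -> (0 < x)%N /\ x <> 1%N) ->
  mult_indep [seq (x%:R : rat) | x <- a] ->
  mult_indep [seq (x%:R : rat) | x <- a'] ->
  char_poly_arr (arrA n [seq (x%:R : rat) | x <- a])
  = char_poly_arr (arrA n [seq (x%:R : rat) | x <- a']).
Proof.
move=> _ Hs1 Hs2 _ _ Ha1 Ha2 Hi1 Hi2.
have [Hs1' Hnz1] := nat_props Hs1 Ha1.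
have [Hs2' Hnz2] := nat_props Hs2 Ha2.
set ar1 := [seq (x%:R : rat) | x <- a] in Hs1' Hnz1 Hi1 *.
set ar2 := [seq (x%:R : rat) | x <- a'] in Hs2' Hnz2 Hi2 *.
have ad1 := monoA_add Hnz1.
have nz1 := monoA_nz Hnz1.
have o1 := monoA_1 Hs1' Hi1.
have ad2 := monoA_add Hnz2.
have nz2 := monoA_nz Hnz2.
have o2 := monoA_1 Hs2' Hi2.
set f1 := fun x : arow m n => normz (vec (monoA ar1) x).
set f2 := fun x : arow m n => normz (vec (monoA ar2) x).
have [T1 [e1 e2]] : exists T1, undup (map f1 (T0 m n)) = map f1 T1 /\
                               undup (map f2 (T0 m n)) = map f2 T1.
  apply: undup_transfer => x y.
  by rewrite /f1 /f2 (f_eq ad1 nz1 o1) (f_eq ad2 nz2 o2).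
have -> : arrA n ar1 = map f1 T1 by rewrite -e1 /arrA (normals_T0 n Hs1') -map_comp.
have -> : arrA n ar2 = map f2 T1 by rewrite -e2 /arrA (normals_T0 n Hs2') -map_comp.
rewrite (cpa_gen (rank_part ad1 nz1 o1 (size_map f1 T1))).
by rewrite (cpa_gen (rank_part ad2 nz2 o2 (size_map f2 T1))).
Qed.
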